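(* Let $K$ be any real number field and let $a,b$ be arbitrary nonzero elements of $K$ with $a>0$. Then there exist a generator $g\neq 1$ of $K$ (i.e. $\mathbb{Q}(g)=K$) and $m_1,m_2,m_3,m_4,m_5\in K$ with $m_2\neq m_3$ such that $$\frac{1}{a}\left(\frac{m_1}{m_2-m_3}\right)^2 - \frac{b}{a}\left(\frac{m_4}{m_2-m_3}\right)^2 + b\left(\frac{m_5}{m_2-m_3}\right)^2 = 1 + \frac{2}{g-1}.$$
   Context: A real number field is a field $K\subset\mathbb{R}$ with $[K:\mathbb{Q}]<\infty$. *)

(* Defs.v *)
From HB Require Import structures.
From mathcomp Require Import all_boot all_order all_algebra.
From mathcomp Require Import reals.
Set Implicit Arguments. Unset Strict Implicit. Unset Printing Implicit Defensive.
Import Order.TTheory GRing.Theory Num.Theory.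
Local Open Scope ring_scope.

Definition is_subfield (R : realType) (K : R -> Prop) : Prop :=
  K 0 /\ K 1 /\
  (forall x y, K x -> K y -> K (x + y)) /\
  (forall x, K x -> K (- x)) /\
  (forall x y, K x -> K y -> K (x * y)) /\
  (forall x, K x -> x != 0 -> K (x^-1)).

(* K has finite degree over Q: K is spanned over Q by finitely many elements. *)
Definition finite_over_Q (R : realType) (K : R -> Prop) : Prop :=
  exists s : seq R, forall x, K x <->
    exists c : seq rat, size c = size s /\
      x = \sum_(i < size s) ratr (nth 0 c i) * nth 0 s i.

Definition real_number_field (R : realType) (K : R -> Prop) : Prop :=
  is_subfield K /\ finite_over_Q K.

(* Q(g): the smallest subfield of R containing g. *)
Definition Qadj (R : realType) (g : R) : R -> Prop :=
  fun x => forall F : R -> Prop, is_subfield F -> F g -> F x.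

Definition generates (R : realType) (K : R -> Prop) (g : R) : Prop :=
  forall x, K x <-> Qadj g x.

(* Main.v *)
Require Import Defs.
From HB Require Import structures.
From mathcomp Require Import all_boot all_order all_algebra all_field.
From mathcomp Require Import reals ring.
Import Order.TTheory GRing.Theory Num.Theory.
Local Open Scope ring_scope.

Set Implicit Arguments. Unset Strict Implicit.
Section Aux.
Variable R : realType.
Implicit Types (F : R -> Prop) (g x y z w : R).

Lemma sf0 F : is_subfield F -> F 0. Proof. by case. Qed.
Lemma sf1 F : is_subfield F -> F 1. Proof. by case=> _ []. Qed.
Lemma sfD F x y : is_subfield F -> F x -> F y -> F (x + y).
Proof. by case=> _ [_ [H _]]; apply: H. Qed.
Lemma sfN F x : is_subfield F -> F x -> F (- x).
Proof. by case=> _ [_ [_ [H _]]]; apply: H. Qed.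
Lemma sfM F x y : is_subfield F -> F x -> F y -> F (x * y).
Proof. by case=> _ [_ [_ [_ [H _]]]]; apply: H. Qed.
Lemma sfV F x : is_subfield F -> F x -> F (x^-1).
Proof.
case=> F0 [_ [_ [_ [_ H]]]] Fx; have [->|nz] := eqVneq x 0; last by apply: H.
by rewrite invr0.
Qed.
Lemma sfB F x y : is_subfield F -> F x -> F y -> F (x - y).
Proof. by move=> sF Fx Fy; apply: sfD => //; apply: sfN. Qed.
Lemma sfDiv F x y : is_subfield F -> F x -> F y -> F (x / y).
Proof. by move=> sF Fx Fy; apply: sfM => //; apply: sfV. Qed.
Lemma sfX F x n : is_subfield F -> F x -> F (x ^+ n).
Proof.
move=> sF Fx; elim: n => [|n IH]; first by rewrite expr0; apply: sf1.
by rewrite exprS; apply: sfM.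
Qed.
Lemma sfnat F n : is_subfield F -> F n%:R.
Proof.
move=> sF; elim: n => [|n IH]; first by apply: sf0.
by rewrite -addn1 natrD; apply: sfD => //; apply: sf1.
Qed.
Lemma sfMn F x n : is_subfield F -> F x -> F (x *+ n).
Proof. by move=> sF Fx; rewrite -mulr_natr; apply: sfM => //; apply: sfnat. Qed.
Lemma sfint F (z : int) : is_subfield F -> F z%:~R.
Proof.
move=> sF; case: z => n; first by apply: sfnat.
by rewrite NegzE mulrNz; apply: sfN => //; apply: sfnat.
Qed.
Lemma sfrat F r : is_subfield F -> F (ratr r).
Proof. by move=> sF; rewrite /ratr; apply: sfDiv => //; apply: sfint. Qed.
Lemma sfhorner F (q : {poly rat}) z : is_subfield F -> F z -> F (map_poly ratr q).[z].
Proof.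
move=> sF Fz; elim/poly_ind: q => [|p c IH].
  by rewrite rmorph0 horner0; apply: sf0.
rewrite rmorphD rmorphM /= map_polyX map_polyC hornerMXaddC.
apply: sfD => //; [exact: sfM | exact: sfrat].
Qed.
Lemma sfsum F n (f : 'I_n -> R) : is_subfield F -> (forall i, F (f i)) ->
  F (\sum_(i < n) f i).
Proof.
move=> sF Hf; elim/big_ind: _ => //; first by apply: sf0.
by move=> x y; apply: sfD.
Qed.

Lemma Qadj_sf g : is_subfield (Qadj g).
Proof.
split; first by move=> F sF _; apply: sf0.
split; first by move=> F sF _; apply: sf1.
split; first by move=> x y Hx Hy F sF Fg; apply: sfD => //; [apply: Hx|apply: Hy].
split; first by move=> x Hx F sF Fg; apply: sfN => //; apply: Hx.
split; first by move=> x y Hx Hy F sF Fg; apply: sfM => //; [apply: Hx|apply: Hy].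
by move=> x Hx _ F sF Fg; apply: sfV => //; apply: Hx.
Qed.
Lemma Qadj_self g : Qadj g g. Proof. by move=> F. Qed.
Lemma Qadj_trans z y w : Qadj z y -> Qadj y w -> Qadj z w.
Proof. by move=> Hzy Hyw F sF Fz; apply: Hyw => //; apply: Hzy. Qed.
Lemma Qadj_horner z w : (exists q : {poly rat}, (map_poly ratr q).[z] = w) -> Qadj z w.
Proof. by case=> q <- F sF Fz; apply: sfhorner. Qed.

End Aux.

Section Alg.
Variable R : realType.

Lemma alg_of_K (K : R -> Prop) (hK : real_number_field K) x :
  K x -> exists2 p : {poly rat}, p != 0 & root (map_poly ratr p) x.
Proof.
case: hK => sK [s Hs] Kx; set n := size s.
have Hc i : exists c : seq rat, (size c == n) &&
   (x ^+ i == \sum_(j < n) ratr (nth 0 c j) * nth 0 s j).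
  have : K (x ^+ i) by apply: sfX.
  by case/Hs => c [Hc Hx]; exists c; rewrite Hc -Hx !eqxx.
pose c i := xchoose (Hc i).
have cP i : x ^+ i = \sum_(j < n) ratr (nth 0 (c i) j) * nth 0 s j.
  by have /andP[_ /eqP] := xchooseP (Hc i).
pose M : 'M[rat]_(n.+1, n) := \matrix_(i, j) nth 0 (c i) j.
have nzk : kermx M != 0.
  rewrite -mxrank_eq0 mxrank_ker subn_eq0 -ltnNge ltnS; exact: rank_leq_col.
have [i nzi] : exists i, row i (kermx M) != 0.
  apply/existsP; apply: contraNT nzk => /existsPn H; apply/eqP/row_matrixP => i.
  by rewrite row0; apply/eqP; exact: negbNE (H i).
set v := row i (kermx M) in nzi.
have vM : v *m M = 0 by apply/sub_kermxP; exact: row_sub.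
exists (\poly_(k < n.+1) v 0 (inord k)).
  apply: contraNneq nzi => p0; apply/eqP/rowP => j.
  move/(congr1 (fun q : {poly rat} => q`_j)): p0.
  by rewrite coef_poly coef0 ltn_ord inord_val => ->; rewrite mxE.
rewrite /root (@horner_coef_wide _ n.+1); last first.
  by rewrite size_map_poly; exact: size_poly.
have -> : \sum_(k < n.+1) (map_poly ratr (\poly_(k0 < n.+1) v 0 (inord k0)))`_k * x ^+ k
   = \sum_(k < n.+1) \sum_(j < n) ratr (v 0 k * M k j) * nth 0 s j.
  apply: eq_bigr => k _; rewrite coef_map coef_poly ltn_ord inord_val cP mulr_sumr.
  by apply: eq_bigr => j _; rewrite rmorphM /M !mxE mulrA.
rewrite exchange_big /= big1 //= => j _.
rewrite -mulr_suml -rmorph_sum.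
have -> : \sum_(k < n.+1) v 0 k * M k j = (v *m M) 0 j by rewrite mxE.
by rewrite vM mxE rmorph0 mul0r.
Qed.

Lemma K_of_s (K : R -> Prop) (s : seq R) (Hs : forall x, K x <->
    exists c : seq rat, size c = size s /\
      x = \sum_(i < size s) ratr (nth 0 c i) * nth 0 s i) y :
  y \in s -> K y.
Proof.
move=> ys; apply/Hs; set n := size s; set i := index y s.
exists (mkseq (fun j => (j == i)%:R) n); split; first by rewrite size_mkseq.
have ilt : (i < n)%N by rewrite index_mem.
rewrite (bigD1 (Ordinal ilt)) //= big1 ?addr0.
  by rewrite nth_mkseq // eqxx rmorph1 mul1r nth_index.
move=> j /eqP nji; rewrite nth_mkseq //.
have -> : (nat_of_ord j == i) = false.
  by apply/eqP => eji; apply: nji; apply: val_inj.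
by rewrite rmorph0 mul0r.
Qed.

End Alg.

Section PET.
Variable R : realType.
Local Notation "p ^ f" := (map_poly f p) : ring_scope.

Lemma PET_gen (x y : R) (p q : {poly rat}) : p != 0 -> root (p ^ ratr) x ->
  q != 0 -> root (q ^ ratr) y ->
  exists2 r : {poly R}, r != 0 & forall n : nat, ~~ root r n%:R ->
    Qadj (n%:R * y - x) x /\ Qadj (n%:R * y - x) y.
Proof.
move=> nz_p px0 nz_q qy_0.
have /pcharf0P pcharF0 := pchar_num rat.
without loss{nz_q} sep_q: q qy_0 / separable_poly q.
  move=> IHq; apply: IHq (make_separable nz_q).
  have /dvdpP[q1 Dq] := dvdp_gcdl q q^`().
  rewrite {1}Dq mulpK ?gcdp_eq0; last by apply/nandP; left.
  have [n [r nz_ry Dr]] := multiplicity_XsubC (q ^ ratr) y.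
  rewrite map_poly_eq0 nz_q /= in nz_ry.
  case: n => [|n] in Dr; first by rewrite Dr mulr1 (negPf nz_ry) in qy_0.
  have: ('X - y%:P) ^+ n.+1 %| q ^ ratr by rewrite Dr dvdp_mulIr.
  rewrite Dq rmorphM /= gcdp_map -(eqp_dvdr _ (gcdp_mul2l _ _ _)) -deriv_map Dr.
  rewrite dvdp_gcd derivM deriv_exp derivXsubC mul1r !mulrA dvdp_mulIr /=.
  rewrite mulrDr mulrA dvdp_addr ?dvdp_mulIr // exprS -scaler_nat -!scalerAr.
  rewrite dvdpZr -?(rmorph_nat (ratr : {rmorphism rat -> R})) ?fmorph_eq0 ?pcharF0 //.
  rewrite mulrA dvdp_mul2r ?expf_neq0 ?polyXsubC_eq0 //.
  by rewrite Gauss_dvdpl ?dvdp_XsubCl // coprimep_sym coprimep_XsubC.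
have [r nz_r PETxy] := large_field_PET nz_p px0 qy_0 sep_q.
exists r => // n nr.
have := PETxy n%:R; rewrite rmorph_nat => /(_ nr) [Hx Hy].
by split; apply: Qadj_horner.
Qed.

Lemma nonroot_sq (r : {poly R}) : r != 0 -> exists m : nat, ~~ root r (m ^ 2)%:R.
Proof.
move=> nz_r.
pose ts := mkseq (fun m => (m ^ 2)%:R : R) (size r).
have /(max_ring_poly_roots nz_r)/=/implyP: uniq_roots ts.
  rewrite uniq_rootsE mkseq_uniq // => m n /eqP.
  by rewrite eqr_nat eqn_sqr => /eqP.
rewrite size_mkseq ltnn implybF all_map => /allPn[n _ /= nr].
by exists n.
Qed.

End PET.

Section Main.
Variable R : realType.

Lemma gen_list (K : R -> Prop) (sK : is_subfield K)
  (alg : forall x, K x -> exists2 p : {poly rat}, p != 0 & root (map_poly ratr p) x)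
  (l : seq R) : (forall y, y \in l -> K y) ->
  exists g, K g /\ forall y, y \in l -> Qadj g y.
Proof.
elim: l => [|y l IH] Hl; first by exists 0; split => //; apply: sf0.
have [g [Kg Hg]] : exists g, K g /\ forall y, y \in l -> Qadj g y.
  by apply: IH => w wl; apply: Hl; rewrite inE wl orbT.
have Ky : K y by apply: Hl; rewrite inE eqxx.
have [p nz_p pg] := alg g Kg; have [q nz_q qy] := alg y Ky.
have [n [Hx Hy]] := pchar0_PET nz_p pg nz_q qy (pchar_num rat).
exists (y *+ n - g); split; first by apply: sfB => //; apply: sfMn.
move=> w; rewrite inE => /orP[/eqP -> | wl]; first exact: Qadj_horner.
apply: Qadj_trans (Hg _ wl); exact: Qadj_horner.
Qed.

End Main.

Unset Implicit Arguments.

Theorem lemma3p3 (R : realType) (K : R -> Prop) (hK : real_number_field K)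
  (a b : R) (Ka : K a) (Kb : K b) (a0 : a != 0) (b0 : b != 0) (apos : 0 < a) :
  exists g m1 m2 m3 m4 m5 : R,
    [/\ generates K g, g != 1,
        [/\ K m1, K m2, K m3, K m4 & K m5], m2 != m3 &
        a^-1 * (m1 / (m2 - m3)) ^+ 2 - b / a * (m4 / (m2 - m3)) ^+ 2
          + b * (m5 / (m2 - m3)) ^+ 2 = 1 + 2 / (g - 1)].
Proof.
have alg := alg_of_K hK.
case: (hK) => sK [s Hs].
have [gam [Kgam Hgam]] := gen_list sK alg (K_of_s Hs).
have Kgen : forall x, K x -> Qadj gam x.
  move=> x /Hs [c [_ ->]]; apply: sfsum => [|i]; first exact: Qadj_sf.
  apply: (sfM (Qadj_sf gam)); first exact: sfrat (Qadj_sf gam).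
  by apply: Hgam; exact: mem_nth.
have Kx1 : K (gam - gam ^+ 2) by apply: sfB => //; apply: sfX.
have Ky1 : K (gam ^+ 2) by apply: sfX.
have [p1 nz_p1 px1] := alg _ Kx1; have [q1 nz_q1 qy1] := alg _ Ky1.
have [n [Hx1 Hy1]] := pchar0_PET nz_p1 px1 nz_q1 qy1 (pchar_num rat).
set z1 := _ - _ in Hx1 Hy1.
set N : R := (n.+1)%:R.
have N0 : N != 0 by rewrite pnatr_eq0.
set p := gam - (2 * N)^-1.
have Kp : K p by apply: sfB => //; apply: sfV => //; apply: sfM => //; apply: sfnat.
have z1E : z1 = N * p ^+ 2 - (4 * N)^-1.
  rewrite /z1 /p /N -mulr_natr. 
  have e : (n.+1)%:R = n%:R + 1 :> R by rewrite -addn1 natrD.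
  rewrite e; field; rewrite -e //.
have Qz1 : Qadj (p ^+ 2) z1.
  rewrite z1E; apply: (sfB (Qadj_sf _)).
    apply: (sfM (Qadj_sf _)); [exact: (sfnat _ (Qadj_sf _)) | exact: Qadj_self].
  apply: (sfV (Qadj_sf _)); apply: (sfM (Qadj_sf _)); exact: (sfnat _ (Qadj_sf _)).
have Hp2 : Qadj (p ^+ 2) gam.
  refine (Qadj_trans Qz1 _).
  have := sfD (Qadj_sf z1) (Qadj_horner Hx1) (Qadj_horner Hy1).
  by rewrite subrK.
have Kp2 : K (p ^+ 2) by apply: sfX.
set e1 := a * p ^+ 2.
have Ke1 : K e1 by apply: sfM.
have Kba : K (b / a) by apply: sfDiv.
have [pa nz_pa rpa] := alg _ Kba; have [pe nz_pe rpe] := alg _ Ke1.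
have [r1 nz_r1 H1] := PET_gen nz_pa rpa nz_pe rpe.
have [m1 Hm1] := nonroot_sq nz_r1.
have [Hw1 Hw2] := H1 _ Hm1.
set w := _ - _ in Hw1 Hw2.
have Kw : K w by apply: sfB => //; apply: sfM => //; apply: sfnat.
have Knw : K (- w) by apply: sfN.
have [pw nz_pw rpw] := alg _ Knw; have [pb nz_pb rpb] := alg _ Kb.
have [r2 nz_r2 H2] := PET_gen nz_pw rpw nz_pb rpb.
have nz_r2' : r2 * ('X - ((1 - w) / b)%:P) != 0.
  by rewrite mulf_neq0 // polyXsubC_eq0.
have [m2 Hm2] := nonroot_sq nz_r2'.
move: Hm2; rewrite rootM negb_or root_XsubC => /andP[Hr2 Hne].
have [Hc1 Hc2] := H2 _ Hr2.
set c := _ - _ in Hc1 Hc2.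
have Qcw : Qadj c w by have := sfN (Qadj_sf c) Hc1; rewrite opprK.
have Qcba := Qadj_trans Qcw Hw1.
have Qce1 := Qadj_trans Qcw Hw2.
have Qca : Qadj c a.
  have := sfDiv (Qadj_sf c) Hc2 Qcba.
  by rewrite invf_div mulrC divfK.
have Qcp2 : Qadj c (p ^+ 2).
  have := sfDiv (Qadj_sf c) Qce1 Qca.
  by rewrite /e1 mulrAC divff // mul1r.
have Qcx : forall x, K x -> Qadj c x.
  by move=> x Kx; exact: (Qadj_trans (Qadj_trans Qcp2 Hp2) (Kgen x Kx)).
have Kc : K c by apply: sfB => //; [apply: sfM => //; apply: sfnat].
have c1 : c != 1.
  apply: contraNneq Hne => c1; apply/eqP.
  move: c1; rewrite /c opprK => /(congr1 (fun t => (t - w) / b)).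
  by rewrite addrK mulfK.
have c1' : c - 1 != 0 by rewrite subr_eq0.
set g := (c + 1) / (c - 1).
have eg : c = 1 + 2 / (g - 1).
  rewrite /g; field; rewrite c1' /=.
  have -> : c + 1 + -1 * (c - 1) = 2 by ring.
  by rewrite pnatr_eq0.
have Qgc : Qadj g c.
  rewrite eg; apply: (sfD (Qadj_sf _)); first exact: (sf1 (Qadj_sf _)).
  apply: (sfDiv (Qadj_sf _)); first exact: (sfnat _ (Qadj_sf _)).
  apply: (sfB (Qadj_sf _)); [exact: Qadj_self | exact: (sf1 (Qadj_sf _))].
have Kg : K g.
  apply: (sfDiv sK); [apply: (sfD sK) | apply: (sfB sK)] => //; exact: (sf1 sK).
exists g, (m1%:R * a * p), 1, 0, 1, m2%:R; split.
- move=> x; split; first by move=> Kx; exact: (Qadj_trans Qgc (Qcx x Kx)).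
  by move=> H; apply: H.
- apply/eqP => g1; move: eg; rewrite g1 subrr invr0 mulr0 addr0 => c1e.
  by move/eqP: c1.
- split => //; [|exact: (sf1 sK)|exact: (sf0 sK)|exact: (sf1 sK)|exact: (sfnat _ sK)].
  by apply: (sfM sK) => //; apply: (sfM sK) => //; exact: (sfnat _ sK).
- exact: oner_neq0.
rewrite -eg /c /w /e1 subr0 !divr1 !natrX.
by field.
Qed.
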